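(* Let $F\colon\mathbf{A}\to\mathbf{C}$ be a discrete opfibration and $J\colon\mathbf{A}\to\mathbf{B}$ a cosieve between small categories, and let $\bar F\colon\mathbf{B}\to\mathbf{D}$, $\bar J\colon\mathbf{C}\to\mathbf{D}$ be a pushout of $J$ and $F$ in $\mathbf{Cat}$ (so $\bar F\circ J=\bar J\circ F$). Then $\bar F$ is a discrete opfibration.
   Context: $\mathbf{Cat}$ is the category of small categories and functors. A functor $F\colon\mathbf{A}\to\mathbf{B}$ is a discrete opfibration if for each object $A$ of $\mathbf{A}$ and each morphism $b$ of $\mathbf{B}$ with domain $FA$ there is a unique morphism $a$ of $\mathbf{A}$ with domain $A$ and $Fa=b$. A cosieve is an injective-on-objects discrete opfibration. *)

(* Defs.v *)
Record Category := {
  Ob : Type;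
  Mor : Type;
  dom : Mor -> Ob;
  cod : Mor -> Ob;
  idm : Ob -> Mor;
  (* comp g f = g o f; only meaningful when cod f = dom g *)
  comp : Mor -> Mor -> Mor;
  dom_id : forall x, dom (idm x) = x;
  cod_id : forall x, cod (idm x) = x;
  dom_comp : forall f g, cod f = dom g -> dom (comp g f) = dom f;
  cod_comp : forall f g, cod f = dom g -> cod (comp g f) = cod g;
  comp_id_r : forall f, comp f (idm (dom f)) = f;
  comp_id_l : forall f, comp (idm (cod f)) f = f;
  comp_assoc : forall f g h, cod f = dom g -> cod g = dom h ->
    comp h (comp g f) = comp (comp h g) f
}.

Arguments dom {c} _.
Arguments cod {c} _.
Arguments idm {c} _.
Arguments comp {c} _ _.

Record Functor (A B : Category) := {
  fob : Ob A -> Ob B;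
  fmor : Mor A -> Mor B;
  fdom : forall f, dom (fmor f) = fob (dom f);
  fcod : forall f, cod (fmor f) = fob (cod f);
  fid : forall x, fmor (idm x) = idm (fob x);
  fcomp : forall f g, cod f = dom g -> fmor (comp g f) = comp (fmor g) (fmor f)
}.

Arguments fob {A B} _ _.
Arguments fmor {A B} _ _.

Definition fcompose {A B C : Category} (G : Functor B C) (F : Functor A B)
  : Functor A C.
Proof.
  refine {| fob := fun x => fob G (fob F x);
            fmor := fun f => fmor G (fmor F f) |}.
  - intro f. rewrite fdom, fdom. reflexivity.
  - intro f. rewrite fcod, fcod. reflexivity.
  - intro x. rewrite fid, fid. reflexivity.
  - intros f g H. rewrite fcomp by exact H. apply fcomp.
    rewrite fcod, fdom, H. reflexivity.
Defined.

Definition feq {A B : Category} (F G : Functor A B) : Prop :=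
  (forall x, fob F x = fob G x) /\ (forall f, fmor F f = fmor G f).

Definition discrete_opfibration {A B : Category} (F : Functor A B) : Prop :=
  forall (x : Ob A) (b : Mor B), dom b = fob F x ->
    exists! a : Mor A, dom a = x /\ fmor F a = b.

Definition cosieve {A B : Category} (J : Functor A B) : Prop :=
  (forall x y : Ob A, fob J x = fob J y -> x = y) /\ discrete_opfibration J.

Definition is_pushout {A B C D : Category}
  (J : Functor A B) (F : Functor A C) (Fbar : Functor B D) (Jbar : Functor C D)
  : Prop :=
  feq (fcompose Fbar J) (fcompose Jbar F) /\
  forall (E : Category) (G : Functor B E) (H : Functor C E),
    feq (fcompose G J) (fcompose H F) ->
    exists K : Functor D E,
      feq (fcompose K Fbar) G /\ feq (fcompose K Jbar) H /\
      forall K' : Functor D E,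
        feq (fcompose K' Fbar) G -> feq (fcompose K' Jbar) H -> feq K' K.

(* Main.v *)
Require Import Defs.
From Stdlib Require Import Classical ClassicalEpsilon ProofIrrelevance.

Section Push.
Variables (A B C : Category) (F : Functor A C) (J : Functor A B).
Hypothesis HF : discrete_opfibration F.
Hypothesis HJi : forall x y, fob J x = fob J y -> x = y.
Hypothesis HJ : discrete_opfibration J.

Lemma sig_eq (T : Type) (P : T -> Prop) (x y : sig P) :
  proj1_sig x = proj1_sig y -> x = y.
Proof.
  destruct x as [x hx], y as [y hy]; simpl; intro e; subst.
  f_equal; apply proof_irrelevance.
Qed.

Definition inJ (y : Ob B) : Prop := exists a, fob J a = y.
Definition JinvP (y : Ob B) (h : inJ y) : Ob A :=
  proj1_sig (constructive_indefinite_description _ h).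
Lemma JinvP_spec y h : fob J (JinvP y h) = y.
Proof. unfold JinvP. destruct (constructive_indefinite_description _ h); simpl; auto. Qed.
Lemma JinvP_J a h : JinvP (fob J a) h = a.
Proof. apply HJi, JinvP_spec. Qed.

Definition ObE := (Ob C + {y : Ob B | ~ inJ y})%type.
Definition MorE := (Mor C + {b : Mor B | ~ inJ (dom b)})%type.

Definition phi (y : Ob B) : ObE :=
  match excluded_middle_informative (inJ y) with
  | left h => inl (fob F (JinvP y h))
  | right h => inr (exist _ y h) end.

Lemma phi_J a : phi (fob J a) = inl (fob F a).
Proof.
  unfold phi; destruct (excluded_middle_informative _) as [h|h].
  - rewrite JinvP_J; reflexivity.
  - exfalso; apply h; exists a; reflexivity.
Qed.
Lemma phi_out y (h : ~ inJ y) : phi y = inr (exist _ y h).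
Proof.
  unfold phi; destruct (excluded_middle_informative _) as [h'|h'].
  - contradiction.
  - f_equal; apply sig_eq; reflexivity.
Qed.
Lemma phi_inl y x : phi y = inl x -> exists a, fob J a = y /\ fob F a = x.
Proof.
  unfold phi; destruct (excluded_middle_informative _) as [h|h]; intro e;
    inversion e; subst.
  exists (JinvP y h); split; auto using JinvP_spec.
Qed.
Lemma phi_inr y z : phi y = inr z -> proj1_sig z = y.
Proof.
  unfold phi; destruct (excluded_middle_informative _) as [h|h]; intro e;
    inversion e; subst; reflexivity.
Qed.

Lemma J_mor_dom b : inJ (dom b) -> exists a, fmor J a = b.
Proof.
  intros [a0 e]. destruct (HJ a0 b (eq_sym e)) as [a [[_ e2] _]].
  exists a; exact e2.
Qed.
Lemma notJm b : ~ (exists a, fmor J a = b) -> ~ inJ (dom b).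
Proof. intros h h'; apply h, J_mor_dom, h'. Qed.
Lemma Jm_inj a a' : fmor J a = fmor J a' -> a = a'.
Proof.
  intro e.
  assert (ed : dom a = dom a').
  { apply HJi. rewrite <- !fdom, e; reflexivity. }
  destruct (HJ (dom a) (fmor J a) (fdom _ _ J a)) as [x [_ u]].
  rewrite <- (u a (conj eq_refl eq_refl)).
  apply u; split; auto.
Qed.

Definition JmP b (h : exists a, fmor J a = b) : Mor A :=
  proj1_sig (constructive_indefinite_description _ h).
Lemma JmP_spec b h : fmor J (JmP b h) = b.
Proof. unfold JmP. destruct (constructive_indefinite_description _ h); simpl; auto. Qed.

Definition psi (b : Mor B) : MorE :=
  match excluded_middle_informative (exists a, fmor J a = b) with
  | left h => inl (fmor F (JmP b h))
  | right h => inr (exist _ b (notJm b h)) end.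

Lemma psi_J a : psi (fmor J a) = inl (fmor F a).
Proof.
  unfold psi; destruct (excluded_middle_informative _) as [h|h].
  - f_equal; f_equal; apply Jm_inj, JmP_spec.
  - exfalso; apply h; exists a; reflexivity.
Qed.
Lemma psi_out b (h : ~ inJ (dom b)) : psi b = inr (exist _ b h).
Proof.
  unfold psi; destruct (excluded_middle_informative _) as [h'|h'].
  - exfalso; apply h. destruct h' as [a e]. exists (dom a). rewrite <- e, fdom; reflexivity.
  - f_equal; apply sig_eq; reflexivity.
Qed.

Definition liftF (a0 : Ob A) (c : Mor C) : Mor A :=
  match excluded_middle_informative (exists a, dom a = a0 /\ fmor F a = c) with
  | left h => proj1_sig (constructive_indefinite_description _ h)
  | right _ => idm a0 end.
Lemma liftF_spec a0 c : dom c = fob F a0 -> dom (liftF a0 c) = a0 /\ fmor F (liftF a0 c) = c.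
Proof.
  intro e. unfold liftF; destruct (excluded_middle_informative _) as [h|h].
  - destruct (constructive_indefinite_description _ h); simpl; auto.
  - exfalso; apply h. destruct (HF a0 c e) as [a [p _]]; eauto.
Qed.
Lemma liftF_uniq a0 c a : dom a = a0 -> fmor F a = c -> liftF a0 c = a.
Proof.
  intros e1 e2.
  assert (e : dom c = fob F a0) by (subst; apply fdom).
  destruct (liftF_spec a0 c e) as [s1 s2].
  destruct (HF a0 c e) as [x [_ u]].
  rewrite <- (u a (conj e1 e2)). symmetry; apply u; auto.
Qed.

Definition domE (g : MorE) : ObE :=
  match g with inl c => inl (dom c)
  | inr b => inr (exist _ (dom (proj1_sig b)) (proj2_sig b)) end.
Definition codE (g : MorE) : ObE :=
  match g with inl c => inl (cod c) | inr b => phi (cod (proj1_sig b)) end.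
Lemma id_ok (y : {y | ~ inJ y}) : ~ inJ (dom (idm (proj1_sig y))).
Proof. rewrite dom_id; exact (proj2_sig y). Qed.
Definition idE (x : ObE) : MorE :=
  match x with inl x => inl (idm x)
  | inr y => inr (exist _ (idm (proj1_sig y)) (id_ok y)) end.
Definition liftB (y : Ob B) (g : MorE) : Mor B :=
  match g with
  | inr g' => proj1_sig g'
  | inl c => match excluded_middle_informative (inJ y) with
             | left h => fmor J (liftF (JinvP y h) c)
             | right _ => idm y end end.
Lemma comp_ok (X b : Mor B) (hb : ~ inJ (dom b)) (e : cod b = dom X) :
  ~ inJ (dom (comp X b)).
Proof. rewrite dom_comp by exact e; exact hb. Qed.
Definition compE (g f : MorE) : MorE :=
  match f with
  | inl f' => match g with inl g' => inl (comp g' f') | inr _ => f end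
  | inr f' =>
    match excluded_middle_informative
            (cod (proj1_sig f') = dom (liftB (cod (proj1_sig f')) g)) with
    | left e => inr (exist _ (comp (liftB (cod (proj1_sig f')) g) (proj1_sig f'))
                           (comp_ok _ _ (proj2_sig f') e))
    | right _ => f end end.

Lemma liftB_inl a0 c : liftB (fob J a0) (inl c) = fmor J (liftF a0 c).
Proof.
  simpl; destruct (excluded_middle_informative _) as [h|h].
  - rewrite JinvP_J; reflexivity.
  - exfalso; apply h; exists a0; reflexivity.
Qed.

Lemma liftB_spec y g : phi y = domE g ->
  dom (liftB y g) = y /\ phi (cod (liftB y g)) = codE g.
Proof.
  destruct g as [c | [g' hg]]; intro H; simpl in H.
  - destruct (phi_inl _ _ H) as [a0 [e1 e2]]; subst y.
    rewrite liftB_inl.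
    destruct (liftF_spec a0 c (eq_sym e2)) as [s1 s2].
    simpl codE. rewrite fdom, fcod, s1, phi_J. split; auto.
    rewrite <- fcod, s2; reflexivity.
  - apply phi_inr in H; simpl in H; subst y; split; reflexivity.
Qed.

Lemma liftB_psi b : liftB (dom b) (psi b) = b.
Proof.
  destruct (classic (exists a, fmor J a = b)) as [[a e]|h].
  - subst b. rewrite psi_J, fdom, liftB_inl.
    f_equal; apply liftF_uniq; reflexivity.
  - rewrite (psi_out b (notJm b h)); reflexivity.
Qed.

Lemma psi_liftB y g : phi y = domE g -> psi (liftB y g) = g.
Proof.
  destruct g as [c | [g' hg]]; intro H; simpl in H.
  - destruct (phi_inl _ _ H) as [a0 [e1 e2]]; subst y.
    rewrite liftB_inl, psi_J.
    destruct (liftF_spec a0 c (eq_sym e2)) as [s1 s2]. rewrite s2; reflexivity.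
  - simpl. rewrite (psi_out g' hg); reflexivity.
Qed.

Lemma compE_inr g (f' : {b : Mor B | ~ inJ (dom b)}) :
  codE (inr f') = domE g ->
  exists h, compE g (inr f') =
    inr (exist _ (comp (liftB (cod (proj1_sig f')) g) (proj1_sig f')) h).
Proof.
  intro H. simpl in H. destruct (liftB_spec _ _ H) as [s1 s2].
  simpl. destruct (excluded_middle_informative _) as [e|e].
  - eexists; reflexivity.
  - exfalso; apply e; auto.
Qed.

Lemma dom_idE x : domE (idE x) = x.
Proof.
  destruct x as [x | [y h]]; simpl.
  - rewrite dom_id; reflexivity.
  - f_equal; apply sig_eq; simpl; apply dom_id.
Qed.
Lemma cod_idE x : codE (idE x) = x.
Proof.
  destruct x as [x | [y h]]; simpl.
  - rewrite cod_id; reflexivity.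
  - rewrite cod_id; apply phi_out.
Qed.

Lemma dom_compE f g : codE f = domE g -> domE (compE g f) = domE f.
Proof.
  destruct f as [c | f'].
  - destruct g as [g | g]; simpl; intro H; try discriminate.
    injection H; intro e. rewrite dom_comp by exact e; reflexivity.
  - intro H. destruct (compE_inr g f' H) as [h e]. rewrite e. simpl.
    f_equal; apply sig_eq; simpl. apply dom_comp.
    simpl in H; destruct (liftB_spec _ _ H) as [s1 _]; auto.
Qed.

Lemma cod_compE f g : codE f = domE g -> codE (compE g f) = codE g.
Proof.
  destruct f as [c | f'].
  - destruct g as [g | g]; simpl; intro H; try discriminate.
    injection H; intro e. rewrite cod_comp by exact e; reflexivity.
  - intro H. destruct (compE_inr g f' H) as [h e]. rewrite e. simpl.
    simpl in H; destruct (liftB_spec _ _ H) as [s1 s2].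
    rewrite cod_comp by auto. exact s2.
Qed.

Lemma comp_id_rE f : compE f (idE (domE f)) = f.
Proof.
  destruct f as [c | [b h]].
  - simpl; rewrite comp_id_r; reflexivity.
  - destruct (compE_inr (inr (exist _ b h)) (exist _ (idm (dom b)) (id_ok (exist _ (dom b) h))))
      as [h' e].
    + pose proof (cod_idE (domE (inr (exist _ b h)))) as X. exact X.
    + change (idE (domE (inr (exist _ b h)))) with
        (inr (B := {b : Mor B | ~ inJ (dom b)}) (A := Mor C)
             (exist _ (idm (dom b)) (id_ok (exist _ (dom b) h)))).
      rewrite e. f_equal; apply sig_eq; simpl. apply comp_id_r.
Qed.

Lemma liftB_idE y : liftB y (idE (phi y)) = idm y.
Proof.
  destruct (classic (inJ y)) as [[a0 e]|h].
  - subst y. rewrite phi_J. simpl idE. rewrite liftB_inl.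
    rewrite (liftF_uniq a0 (idm (fob F a0)) (idm a0)); [apply fid | apply dom_id | apply fid].
  - rewrite (phi_out y h); reflexivity.
Qed.

Lemma comp_id_lE f : compE (idE (codE f)) f = f.
Proof.
  destruct f as [c | f'].
  - simpl; rewrite comp_id_l; reflexivity.
  - destruct (compE_inr (idE (codE (inr f'))) f') as [h e].
    + rewrite dom_idE; reflexivity.
    + rewrite e. destruct f' as [b hb]. f_equal; apply sig_eq; simpl.
      simpl. rewrite liftB_idE. apply comp_id_l.
Qed.

Lemma liftB_comp y g h : phi y = domE g -> codE g = domE h ->
  liftB y (compE h g) = comp (liftB (cod (liftB y g)) h) (liftB y g).
Proof.
  destruct g as [c | [g' hg]]; intros H1 H2.
  - destruct h as [c' | h']; simpl in H2; try discriminate.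
    injection H2; intro e.
    simpl in H1. destruct (phi_inl _ _ H1) as [a0 [e1 e2]]; subst y.
    simpl compE. rewrite !liftB_inl.
    destruct (liftF_spec a0 c (eq_sym e2)) as [s1 s2].
    rewrite fcod, liftB_inl.
    assert (e3 : dom c' = fob F (cod (liftF a0 c))) by (rewrite <- fcod, s2; auto).
    destruct (liftF_spec _ c' e3) as [t1 t2].
    rewrite <- fcomp by auto. f_equal. apply liftF_uniq.
    + rewrite dom_comp by auto; auto.
    + rewrite fcomp by auto. rewrite t2, s2; reflexivity.
  - destruct (compE_inr h (exist _ g' hg) H2) as [p e]. rewrite e. reflexivity.
Qed.

Lemma assocE f g h : codE f = domE g -> codE g = domE h ->
  compE h (compE g f) = compE (compE h g) f.
Proof.
  intros H1 H2. destruct f as [c | f'].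
  - destruct g as [g | g]; simpl in H1; try discriminate.
    destruct h as [h | h]; simpl in H2; try discriminate.
    injection H1; injection H2; intros e2 e1. simpl.
    rewrite comp_assoc by auto; reflexivity.
  - destruct (compE_inr g f' H1) as [p e]. rewrite e.
    pose proof H1 as H1'. simpl in H1'. destruct (liftB_spec _ _ H1') as [s1 s2].
    destruct (compE_inr h (exist _ (comp (liftB (cod (proj1_sig f')) g) (proj1_sig f')) p))
      as [q eq].
    + simpl. rewrite cod_comp by auto. rewrite s2; auto.
    + rewrite eq.
      assert (H3 : codE (inr f') = domE (compE h g)) by (rewrite dom_compE; auto).
      destruct (compE_inr _ f' H3) as [r er]. rewrite er.
      f_equal; apply sig_eq; simpl.
      rewrite cod_comp by auto.
      rewrite (liftB_comp _ g h H1' H2).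
      rewrite <- s2 in H2. destruct (liftB_spec _ _ H2) as [t1 _].
      apply comp_assoc; auto.
Qed.

Definition catE : Category :=
  Build_Category ObE MorE domE codE idE compE dom_idE cod_idE dom_compE cod_compE
    comp_id_rE comp_id_lE assocE.

Lemma fdom_psi b : domE (psi b) = phi (dom b).
Proof.
  destruct (classic (exists a, fmor J a = b)) as [[a e]|h].
  - subst b. rewrite psi_J, fdom, phi_J. simpl. rewrite fdom; reflexivity.
  - rewrite (psi_out b (notJm b h)), (phi_out _ (notJm b h)); reflexivity.
Qed.
Lemma fcod_psi b : codE (psi b) = phi (cod b).
Proof.
  destruct (classic (exists a, fmor J a = b)) as [[a e]|h].
  - subst b. rewrite psi_J, fcod, phi_J. simpl. rewrite fcod; reflexivity.
  - rewrite (psi_out b (notJm b h)); reflexivity.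
Qed.
Lemma fid_psi y : psi (idm y) = idE (phi y).
Proof.
  destruct (classic (inJ y)) as [[a0 e]|h].
  - subst y. rewrite <- fid, psi_J, phi_J, fid; reflexivity.
  - rewrite (phi_out y h). apply (psi_out (idm y) (id_ok (exist _ y h))).
Qed.
Lemma fcomp_psi f g : cod f = dom g -> psi (comp g f) = compE (psi g) (psi f).
Proof.
  intro H.
  destruct (classic (exists a, fmor J a = f)) as [[a e]|h].
  - subst f. rewrite fcod in H.
    destruct (J_mor_dom g (ex_intro _ _ H)) as [a' e']. subst g.
    rewrite fdom in H. apply HJi in H.
    rewrite <- fcomp by auto. rewrite !psi_J. simpl. rewrite fcomp by auto; reflexivity.
  - pose proof (notJm f h) as hf.
    assert (hc : ~ inJ (dom (comp g f))) by (rewrite dom_comp; auto).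
    rewrite (psi_out _ hc), (psi_out f hf).
    destruct (compE_inr (psi g) (exist _ f hf)) as [p e].
    + simpl. rewrite fdom_psi, H; reflexivity.
    + rewrite e. f_equal; apply sig_eq; simpl. rewrite H, liftB_psi; reflexivity.
Qed.

Definition FbarE : Functor B catE :=
  Build_Functor B catE phi psi fdom_psi fcod_psi fid_psi fcomp_psi.

Definition JbarE : Functor C catE.
Proof.
  refine (Build_Functor C catE inl inl _ _ _ _); intros; reflexivity.
Defined.

Lemma FbarE_opfib : discrete_opfibration FbarE.
Proof.
  intros x e H. simpl in *. exists (liftB x e). split.
  - destruct (liftB_spec x e (eq_sym H)) as [s1 _]. split; auto.
    apply psi_liftB; auto.
  - intros b [e1 e2]. subst. rewrite liftB_psi; reflexivity.
Qed.

Lemma comm_E : feq (fcompose FbarE J) (fcompose JbarE F).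
Proof. split; intro; simpl; [apply phi_J | apply psi_J]. Qed.

Variables (D : Category) (Fbar : Functor B D) (Jbar : Functor C D).
Hypothesis HPO : is_pushout J F Fbar Jbar.

Definition Lob (x : ObE) : Ob D :=
  match x with inl x => fob Jbar x | inr y => fob Fbar (proj1_sig y) end.
Definition Lmor (g : MorE) : Mor D :=
  match g with inl c => fmor Jbar c | inr b => fmor Fbar (proj1_sig b) end.

Lemma Lob_phi y : Lob (phi y) = fob Fbar y.
Proof.
  destruct (classic (inJ y)) as [[a0 e]|h].
  - subst y. rewrite phi_J. simpl. symmetry. apply (proj1 (proj1 HPO) a0).
  - rewrite (phi_out y h); reflexivity.
Qed.
Lemma Lmor_psi b : Lmor (psi b) = fmor Fbar b.
Proof.
  destruct (classic (exists a, fmor J a = b)) as [[a e]|h].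
  - subst b. rewrite psi_J. simpl. symmetry. apply (proj2 (proj1 HPO) a).
  - rewrite (psi_out b (notJm b h)); reflexivity.
Qed.

Lemma L_fdom g : dom (Lmor g) = Lob (domE g).
Proof. destruct g; simpl; apply fdom. Qed.
Lemma L_fcod g : cod (Lmor g) = Lob (codE g).
Proof. destruct g; simpl. apply fcod. rewrite Lob_phi; apply fcod. Qed.
Lemma L_fid x : Lmor (idE x) = idm (Lob x).
Proof. destruct x; simpl; apply fid. Qed.
Lemma L_fcomp f g : codE f = domE g -> Lmor (compE g f) = comp (Lmor g) (Lmor f).
Proof.
  destruct f as [c | f'].
  - destruct g as [g | g]; simpl; intro H; try discriminate.
    injection H; intro e. apply fcomp; auto.
  - intro H. destruct (compE_inr g f' H) as [h e]. rewrite e. simpl.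
    simpl in H; destruct (liftB_spec _ _ H) as [s1 s2].
    rewrite fcomp by auto. f_equal.
    rewrite <- Lmor_psi, psi_liftB; auto.
Qed.

Definition LF : Functor catE D :=
  Build_Functor catE D Lob Lmor L_fdom L_fcod L_fid L_fcomp.

Definition idF (X : Category) : Functor X X.
Proof.
  refine (Build_Functor X X (fun x => x) (fun f => f) _ _ _ _); intros; reflexivity.
Defined.

Lemma main_sec : discrete_opfibration Fbar.
Proof.
  destruct HPO as [comm PU].
  destruct (PU catE FbarE JbarE comm_E) as [K [HK1 [HK2 _]]].
  destruct (PU D Fbar Jbar comm) as [K0 [_ [_ Hu]]].
  destruct HK1 as [HK1o HK1m]; destruct HK2 as [HK2o HK2m].
  simpl in HK1o, HK1m, HK2o, HK2m.
  assert (LK : forall d, Lmor (fmor K d) = d).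
  { intro d.
    destruct (Hu (idF D)) as [_ u1]; try (split; intro; reflexivity).
    destruct (Hu (fcompose LF K)) as [_ u2].
    - split; intro x; simpl.
      + rewrite (HK1o x). apply Lob_phi.
      + rewrite (HK1m x). apply Lmor_psi.
    - split; intro x; simpl.
      + rewrite (HK2o x). reflexivity.
      + rewrite (HK2m x). reflexivity.
    - specialize (u1 d); specialize (u2 d). simpl in *. congruence. }
  intros x d Hd.
  assert (He : phi x = domE (fmor K d)).
  { pose proof (fdom _ _ K d) as X. simpl in X. rewrite X, Hd.
    symmetry; apply (HK1o x). }
  exists (liftB x (fmor K d)). split.
  - destruct (liftB_spec _ _ He) as [s1 _]. split; auto.
    rewrite <- Lmor_psi, psi_liftB; auto.
  - intros b [e1 e2]. subst x.
    assert (psi b = fmor K d) by (rewrite <- e2; symmetry; apply (HK1m b)).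
    rewrite <- H, liftB_psi; reflexivity.
Qed.

End Push.

Theorem theorem5p2 (A B C D : Category)
  (F : Functor A C) (J : Functor A B)
  (Fbar : Functor B D) (Jbar : Functor C D) :
  discrete_opfibration F -> cosieve J ->
  is_pushout J F Fbar Jbar ->
  discrete_opfibration Fbar.
Proof.
  intros HF [HJi HJ] HPO.
  exact (main_sec A B C F J HF HJi HJ D Fbar Jbar HPO).
Qed.
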